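(* Let $\Lambda=(I,\varphi_i,\gamma_{ij})$ be a direct system of formulas in a functional language $\mathcal{L}$, $\mathcal{B}$ an $\mathcal{L}$-algebra, and suppose every $\varphi_i$ is realizable in $\mathcal{B}$, so that $\mathcal{B}_\Lambda=L(\Lambda)$ is a limit algebra over $\mathcal{B}$. Then there exists an ultrafilter $D$ over $I$ such that $\mathcal{B}_\Lambda$ embeds into the ultrapower $\mathcal{B}^I/D$.
   Context: Functional language: operation symbols $F$ (arity $n_F$) and constants only. A diagram-formula in a finite reduct $\mathcal{L}'$ of $\mathcal{L}$ in a finite variable set $X$ is a conjunction of atomic formulas and negated atomic formulas of $\mathcal{L}'$ such that: $\neg(x=y)$ is a conjunct for all distinct $x,y\in X$; for each operation $F\in\mathcal{L}'$ and $(x_0,\dots,x_{n_F})\in X^{n_F+1}$ exactly one of $F(x_1,\dots,x_{n_F})=x_0$ and its negation is a conjunct; for each constant $c\in\mathcal{L}'$ and $x\in X$ exactly one of $x=c$, $\neg(x=c)$ is a conjunct. A direct system of formulas $\Lambda=(I,\varphi_i,\gamma_{ij})$: $(I,\le)$ directed; each $\varphi_i$ a consistent diagram-formula in a finite reduct $\mathcal{L}_i$ and finite variables $X_i$; maps $\gamma_{ij}:X_i\to X_j$ ($i\le j$) with $\gamma_{ii}=\mathrm{id}$, $\gamma_{jk}\gamma_{ij}=\gamma_{ik}$, every conjunct of $\varphi_i(\gamma_{ij}(X_i))$ a conjunct of $\varphi_j$; every constant $c$ appears in a conjunct $x=c$ of some $\varphi_i$; for every $F$, $i$, $(x_1,\dots,x_{n_F})\in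 X_i^{n_F}$ some $j\ge i$ has a conjunct $F(\gamma_{ij}(x_1),\dots,\gamma_{ij}(x_{n_F}))=x_j$, $x_j\in X_j$. The limit algebra $L(\Lambda)$: universe $\{(x,i):x\in X_i\}/\!\equiv$ with $(x,i)\equiv(y,j)$ iff $\gamma_{ik}(x)=\gamma_{jk}(y)$ for some $k\ge i,j$; constants and operations are read off from conjuncts $x=c$ and $F(\gamma_{i_1j}(x_1),\dots)=x_j$ of the $\varphi_j$ (well defined). $\varphi_i$ is realizable in $\mathcal{B}$ if it is true under some assignment $X_i\to B$. *)

(* Defs.v *)
From Stdlib Require List.
From mathcomp Require Import all_boot.
Set Implicit Arguments.
Unset Strict Implicit.
Unset Printing Implicit Defensive.

Record language := Language {
  Op : Type;
  ar : Op -> nat;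
  Cst : Type }.

Record algebra (L : language) := Algebra {
  carrier :> Type;
  opI : forall F : Op L, ('I_(ar F) -> carrier) -> carrier;
  cstI : Cst L -> carrier }.
Arguments opI {L} a F args.
Arguments cstI {L} a c.

Definition finite_pred (T : Type) (P : T -> Prop) : Prop :=
  exists s : seq T, forall x, P x -> List.In x s.

(* A diagram-formula in the finite reduct (dOp, dCst) of L in the finite
   variable set X.  Its conjuncts are:
     ~(x = y)                    for all distinct x, y in X;
     F(xs) = x0  if dF F xs x0,  ~(F(xs) = x0) otherwise   (F in dOp);
     x = c       if dC c x,      ~(x = c) otherwise        (c in dCst).
   (dF / dC outside the reduct are irrelevant.) *)
Record diagram (L : language) (X : finType) := Diagram {
  dOp : Op L -> Prop;
  dCst : Cst L -> Prop;
  dOp_fin : finite_pred dOp;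
  dCst_fin : finite_pred dCst;
  dF : forall F : Op L, ('I_(ar F) -> X) -> X -> bool;
  dC : Cst L -> X -> bool }.
Arguments dF {L X} d F xs x0.
Arguments dC {L X} d c x.
Arguments dOp {L X} d F.
Arguments dCst {L X} d c.

Definition holds (L : language) (X : finType) (A : algebra L)
    (phi : diagram L X) (a : X -> A) : Prop :=
  (forall x y : X, x <> y -> a x <> a y) /\
  (forall F, dOp phi F -> forall (xs : 'I_(ar F) -> X) (x0 : X),
      dF phi F xs x0 <-> opI A F (fun m => a (xs m)) = a x0) /\
  (forall c, dCst phi c -> forall x : X,
      dC phi c x <-> cstI A c = a x).

Arguments holds {L X} A phi a.

Definition consistent (L : language) (X : finType) (phi : diagram L X) : Prop :=
  exists (A : algebra L) (a : X -> A), holds A phi a.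

Definition realizable (L : language) (X : finType) (B : algebra L)
    (phi : diagram L X) : Prop :=
  exists a : X -> B, holds B phi a.

Arguments realizable {L X} B phi.

Record dsystem (L : language) := DSystem {
  ix : Type;
  le : ix -> ix -> Prop;
  vars : ix -> finType;
  phi : forall i, diagram L (vars i);
  gam : forall i j, vars i -> vars j }.
Arguments gam {L} d i j x.
Arguments le {L} d i j.
Arguments phi {L} d i.
Arguments vars {L} d i.    (* gamma_ij, meaningful for i <= j *)

Definition is_direct_system (L : language) (S : dsystem L) : Prop :=
  inhabited (ix S) /\
  (forall i, le S i i) /\
  (forall i j k, le S i j -> le S j k -> le S i k) /\
  (forall i j, exists k, le S i k /\ le S j k) /\
  (forall i, consistent (phi S i)) /\
  (forall i (x : vars S i), gam S i i x = x) /\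
  (forall i j k, le S i j -> le S j k ->
     forall x : vars S i, gam S j k (gam S i j x) = gam S i k x) /\
  (* every conjunct of phi_i(gamma_ij(X_i)) is a conjunct of phi_j *)
  (forall i j, le S i j ->
     (forall x y : vars S i, x <> y -> gam S i j x <> gam S i j y) /\
     (forall F, dOp (phi S i) F ->
        dOp (phi S j) F /\
        forall (xs : 'I_(ar F) -> vars S i) (x0 : vars S i),
          dF (phi S j) F (fun m => gam S i j (xs m)) (gam S i j x0)
          = dF (phi S i) F xs x0) /\
     (forall c, dCst (phi S i) c ->
        dCst (phi S j) c /\
        forall x : vars S i, dC (phi S j) c (gam S i j x) = dC (phi S i) c x)) /\
  (forall c : Cst L, exists i (x : vars S i),
     dCst (phi S i) c /\ dC (phi S i) c x) /\
  (forall (F : Op L) i (xs : 'I_(ar F) -> vars S i),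
     exists j (x : vars S j), le S i j /\ dOp (phi S j) F /\
       dF (phi S j) F (fun m => gam S i j (xs m)) x).

(* The limit algebra L(Lambda), presented on representatives (i, x)    *)

Definition lim_elt (L : language) (S : dsystem L) := {i : ix S & vars S i}.

Definition lim_equiv (L : language) (S : dsystem L) (p q : lim_elt S) : Prop :=
  exists k, le S (projT1 p) k /\ le S (projT1 q) k /\
    gam S (projT1 p) k (projT2 p) = gam S (projT1 q) k (projT2 q).

(* the interpretation of the constant c in L(Lambda) is the class of p *)
Definition lim_cst (L : language) (S : dsystem L) (c : Cst L) (p : lim_elt S)
  : Prop :=
  exists i (x : vars S i),
    dCst (phi S i) c /\ dC (phi S i) c x /\ lim_equiv p (existT _ i x).

(* F([ps 0], ..., [ps (n-1)]) = [p] in L(Lambda) *)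
Definition lim_op (L : language) (S : dsystem L) (F : Op L)
    (ps : 'I_(ar F) -> lim_elt S) (p : lim_elt S) : Prop :=
  exists j (x : vars S j),
    (forall m, le S (projT1 (ps m)) j) /\
    dOp (phi S j) F /\
    dF (phi S j) F (fun m => gam S (projT1 (ps m)) j (projT2 (ps m))) x /\
    lim_equiv p (existT _ j x).

Definition ultrafilter (I : Type) (D : (I -> Prop) -> Prop) : Prop :=
  D (fun _ => True) /\
  ~ D (fun _ => False) /\
  (forall A B, D A -> D B -> D (fun k => A k /\ B k)) /\
  (forall A B : I -> Prop, (forall k, A k -> B k) -> D A -> D B) /\
  (forall A : I -> Prop, D A \/ D (fun k => ~ A k)).

(* Elements of B^I/D are represented by f : I -> B, with f ~ g iff
   {k | f k = g k} \in D; operations and constants are pointwise. *)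
Definition ueq (I : Type) (D : (I -> Prop) -> Prop) (B : Type) (f g : I -> B)
  : Prop := D (fun k => f k = g k).

Definition embeds_limit (L : language) (S : dsystem L) (B : algebra L)
    (D : (ix S -> Prop) -> Prop) (h : lim_elt S -> ix S -> B) : Prop :=
  (* well defined on classes and injective *)
  (forall p q, lim_equiv p q <-> ueq D (h p) (h q)) /\
  (forall c p, lim_cst c p -> ueq D (h p) (fun _ => cstI B c)) /\
  (forall F (ps : 'I_(ar F) -> lim_elt S) p, lim_op ps p ->
     ueq D (h p) (fun k => opI B F (fun m => h (ps m) k))).
Arguments embeds_limit {L S} B D h.

(* Main.v *)
Require Import Defs.
From mathcomp Require Import all_boot.
From mathcomp Require Import boolp classical_sets filter.
From Stdlib Require Import Classical.

Theorem mainTheorem11 (L : language) (S : dsystem L) (B : algebra L) :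
  is_direct_system S ->
  (forall i, realizable B (phi S i)) ->
  exists D : (ix S -> Prop) -> Prop,
    ultrafilter D /\ exists h : lim_elt S -> ix S -> B, embeds_limit B D h.
Proof.
move=> [[i0] [Hrefl [Htrans [Hdir [_ [Hid [Hcomp [Hmono _]]]]]]]] HR.
pose F0 : set_system (ix S) := fun A => exists i, forall k, le S i k -> A k.
have F0P : ProperFilter F0.
  split.
    move=> [i Hi]; exact: (Hi i (Hrefl i)).
  split.
  - by exists i0.
  - move=> A B' [i Hi] [j Hj]; have [k [ik jk]] := Hdir i j.
    exists k => l kl; split; [apply: Hi | apply: Hj]; exact: Htrans kl.
  - move=> P Q PQ [i Hi]; exists i => k ik; exact/PQ/Hi.
have [D [DU F0D]] := ultraFilterLemma F0P.
have DF : Filter D by case: DU => -[].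
have Dne : ~ D set0 by case: DU => -[].
have cone : forall i (A : ix S -> Prop), (forall k, le S i k -> A k) -> D A.
  by move=> i A HA; apply: F0D; exists i.
have Dex : forall A : ix S -> Prop, D A -> exists k, A k.
  move=> A DA; apply: NNPP => nA; apply: Dne.
  apply: filterS DA => k Ak; apply: nA; by exists k.
pose a i := proj1_sig (cid (HR i)).
have aH : forall i, holds B (phi S i) (a i) by move=> i; exact: proj2_sig (cid (HR i)).
pose h (p : lim_elt S) (k : ix S) : B :=
  match pselect (le S (projT1 p) k) with
  | left H => a k (gam S (projT1 p) k (projT2 p))
  | right _ => a (projT1 p) (projT2 p) end.
have hE : forall p k, le S (projT1 p) k -> h p k = a k (gam S (projT1 p) k (projT2 p)).
  by move=> p k pk; rewrite /h; case: pselect.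
have ainj : forall k x y, a k x = a k y -> x = y.
  move=> k x y E; apply: NNPP => nxy; have [H1 _] := aH k; exact: H1 _ _ nxy E.
have equivD : forall p q, lim_equiv p q -> D (fun k => h p k = h q k).
  move=> [i x] [j y] [m /= [im [jm E]]]; apply: (cone m) => k mk.
  rewrite !hE /=; try exact: Htrans mk.
  by rewrite -(Hcomp i m k im mk) -(Hcomp j m k jm mk) E.
exists D; split.
  split; first exact: filterT.
  split; first exact: Dne.
  split; first by move=> A B' DA DB; exact: filterI.
  split; first by move=> A B' AB DA; exact: filterS DA.
  by move=> A; exact: in_ultra_setVsetC.
exists h; split; [|split].
- move=> p q; split; first exact: equivD.
  move=> Dpq; case: p q Dpq => i x [j y] Dpq.
  have [m [im jm]] := Hdir i j.
  have [k [E km]] := Dex _ (filterI Dpq (cone m _ (fun k mk => mk))).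
  exists k; split; first exact: (Htrans _ _ _ im km).
  split; first exact: (Htrans _ _ _ jm km).
  apply: (ainj k); move: E; rewrite !hE /=; [done|exact: (Htrans _ _ _ jm km)|exact: (Htrans _ _ _ im km)].
- move=> c p [i [x [ci [cx E]]]].
  apply: filterS (filterI (equivD _ _ E) (cone i _ (fun k ik => ik))).
  move=> k [-> ik]; rewrite hE //=.
  have [_ [_ Hc]] := Hmono i k ik; have [ck Hck] := Hc c ci.
  have [_ [_ H3]] := aH k; apply/esym/(H3 c ck); by rewrite Hck.
- move=> F ps p [j [x [psj [Fj [Fx E]]]]].
  apply: filterS (filterI (equivD _ _ E) (cone j _ (fun k ik => ik))).
  move=> k [-> jk]; rewrite hE //=.
  have [_ [HF _]] := Hmono j k jk; have [Fk HFk] := HF F Fj.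
  have [_ [H2 _]] := aH k.
  have -> : (fun m => h (ps m) k) =
            (fun m => a k (gam S j k (gam S (projT1 (ps m)) j (projT2 (ps m))))).
    apply: funext => m; rewrite hE ?(Hcomp _ _ _ (psj m) jk) //; exact: Htrans jk.
  apply/esym/(H2 F Fk); by rewrite HFk.
Qed.
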